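(* Consider the Team Surviving Orienteers setting described in the context, with feasible path set $\mathcal{X}(p_s,\omega)$ and priorities $d_j>0$. Define the set function $J:2^{\mathcal{X}(p_s,\omega)}\to\mathbb{R}$ by $$J(X)=\sum_{j=1}^V d_j\,\mathbb{E}\Big[1-\prod_{\rho\in X}\big(1-z_j(\rho)\big)\Big]=\sum_{j=1}^V d_j\Big(1-\prod_{\rho\in X}\big(1-\mathbb{E}[z_j(\rho)]\big)\Big),$$ i.e. the weighted expected number of nodes visited by at least one robot when robots follow the paths in $X$. Then $J$ is normalized, non-negative, monotone and submodular.
   Context: Let $\mathcal{G}=(\mathcal{V},\mathcal{E})$ be a finite simple graph with node set $\mathcal{V}=\{1,\dots,V\}$ and edge weights $\omega:\mathcal{E}\to(0,1]$, where $\omega(e)$ is the probability of surviving traversal of edge $e$. A path $\rho$ is a sequence of nodes $\rho(0),\rho(1),\dots,\rho(\lvert\rho\rvert)$ with $(\rho(n-1),\rho(n))\in\mathcal{E}$ for each $n$; $\lvert\rho\rvert$ is its number of edges. For a path $\rho$, let $s_1(\rho),\dots,s_{\lvert\rho\rvert}(\rho)$ be independent Bernoulli random variables with $\mathbb{P}\{s_n(\rho)=1\}=\omega((\rho(n-1),\rho(n)))$, let $a_n(\rho)=\prod_{i=1}^n s_i(\rho)$, and for each node $j$ let $z_j(\rho)=\max_{n=1,\dots,\lvert\rho\rvert} a_n(\rho)\,\mathbb{I}\{\rho(n)=j\}$ (the indicator that a robot following $\rho$ reaches node $j$). Random variables associated with distinct paths are independent. Given a start node $v_s$, a terminal node $v_t$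 and $p_s\in(0,1]$, the feasible set $\mathcal{X}(p_s,\omega)$ is the (assumed nonempty) set of paths $\rho$ with $\rho(0)=v_s$, $\rho(\lvert\rho\rvert)=v_t$ and $\mathbb{P}\{a_{\lvert\rho\rvert}(\rho)=1\}\ge p_s$. Normalized means $J(\emptyset)=0$; monotone means $J(X)\le J(X')$ for $X\subseteq X'$; submodular means $J(X\cup\{\rho\})-J(X)\ge J(X'\cup\{\rho\})-J(X')$ for all $X\subseteq X'\subset\mathcal{X}(p_s,\omega)$ and $\rho\in\mathcal{X}(p_s,\omega)\setminus X'$. *)

(* Defs.v *)
From HB Require Import structures.
From mathcomp Require Import all_boot all_order all_algebra.
From mathcomp Require Import finmap.
Set Implicit Arguments. Unset Strict Implicit. Unset Printing Implicit Defensive.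
Import Order.TTheory GRing.Theory Num.Theory.
Local Open Scope ring_scope.
Local Open Scope fset_scope.

Section TSO.
Variables (R : realFieldType) (T : finType).

Definition simple_graph (e : rel T) : Prop :=
  symmetric e /\ irreflexive e.

Definition edge_weights (e : rel T) (w : T -> T -> R) : Prop :=
  forall u v, e u v -> 0 < w u v <= 1 /\ w u v = w v u.

Definition is_path (e : rel T) (rho : seq T) : bool :=
  if rho is x :: s then path e x s else false.

Definition plen (rho : seq T) : nat := (size rho).-1.

Definition node_is (rho : seq T) (n : nat) (j : T) : bool :=
  if rho is x :: _ then nth x rho n == j else false.

Variable w : T -> T -> R.

(* survival probability of the (i+1)-th edge (rho(i), rho(i+1)) *)
Definition wedge (rho : seq T) (i : nat) : R :=
  if rho is x :: _ then w (nth x rho i) (nth x rho i.+1) else 0.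

(* Sample space for the survival variables s_1..s_|rho| of path rho:
   outcomes b : {ffun 'I_|rho| -> bool}, b i = s_{i+1}. *)
Definition outcome (rho : seq T) := {ffun 'I_(plen rho) -> bool}.

Definition prob (rho : seq T) (b : outcome rho) : R :=
  \prod_(i < plen rho) (if b i then wedge rho i else 1 - wedge rho i).

Definition Expect (rho : seq T) (f : outcome rho -> bool) : R :=
  \sum_(b : outcome rho) prob b * (f b)%:R.

Definition a_var (rho : seq T) (n : nat) (b : outcome rho) : bool :=
  [forall k : 'I_(plen rho), (k < n)%N ==> b k].

(* z_j(rho) = max_{n=1..|rho|} a_n(rho) * I{rho(n) = j} *)
Definition z_var (rho : seq T) (j : T) (b : outcome rho) : bool :=
  [exists i : 'I_(plen rho), node_is rho i.+1 j && a_var i.+1 b].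

Definition Ez (j : T) (rho : seq T) : R := Expect (z_var j (rho := rho)).

Definition Psurv (rho : seq T) : R := Expect (a_var (plen rho) (rho := rho)).

Definition feasible (e : rel T) (vs vt : T) (ps : R) (rho : seq T) : bool :=
  [&& is_path e rho,
      (if rho is x :: s then (x == vs) && (last x s == vt) else false)
    & ps <= Psurv rho].

Definition J (d : T -> R) (X : {fset seq T}) : R :=
  \sum_(j : T) d j * (1 - \prod_(rho <- X) (1 - Ez j rho)).
End TSO.

(* Main.v *)
Require Import Defs.
From HB Require Import structures.
From mathcomp Require Import all_boot all_order all_algebra.
From mathcomp Require Import finmap.
From mathcomp Require Import ring.
Import Order.TTheory GRing.Theory Num.Theory.
Local Open Scope ring_scope.
Local Open Scope fset_scope.

Section Aux.
Variables (R : realFieldType) (T : finType) (e : rel T) (w : T -> T -> R).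

Lemma wedge_bound (rho : seq T) (i : 'I_(plen rho)) :
  edge_weights e w -> is_path e rho -> 0 <= wedge w rho i <= 1.
Proof.
move=> hw; case: rho i => [|x s] i //= hp.
have := (pathP x hp i); rewrite /plen /= in i *.
move=> /(_ (ltn_ord i)) he; have [/andP[h1 h2] _] := hw _ _ he.
by rewrite ltW.
Qed.

Lemma Ez_bound (rho : seq T) j :
  edge_weights e w -> is_path e rho -> 0 <= Ez w j rho <= 1.
Proof.
move=> hw hp.
have hb (i : 'I_(plen rho)) : 0 <= wedge w rho i <= 1 by exact: wedge_bound.
have pge (b : outcome rho) : 0 <= prob w b.
  apply: prodr_ge0 => i _; have /andP[h1 h2] := hb i.
  by case: (b i) => //; rewrite subr_ge0.
have psum : \sum_(b : outcome rho) prob w b = 1.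
  rewrite /prob -(bigA_distr_bigA (fun (i : 'I_(plen rho)) (c : bool) => if c then wedge w rho i else 1 - wedge w rho i)).
  apply: big1 => i _.
  by rewrite big_bool /= addrC subrK.
rewrite /Ez /Expect; apply/andP; split.
  by apply: sumr_ge0 => b _; apply: mulr_ge0 => //; case: (z_var _ _).
apply: (@le_trans _ _ (\sum_(b : outcome rho) prob w b)); last by rewrite psum.
apply: ler_sum => b _.
by case: (z_var _ _) => /=; [rewrite mulr1 | rewrite mulr0 pge].
Qed.

Lemma prod01 (X : {fset seq T}) (F : seq T -> R) :
  (forall r, r \in X -> 0 <= F r <= 1) ->
  0 <= \prod_(r <- X) F r <= 1.
Proof.
move=> h; rewrite big_seq_cond.
elim/big_rec: _ => [|r x /andP[rX _] /andP[x0 x1]]; first by rewrite ler01 lexx.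
have /andP[f0 f1] := h r rX.
rewrite mulr_ge0 //=; apply: le_trans (_ : F r <= 1) => //.
by rewrite -[X in _ <= X]mulr1 ler_wpM2l.
Qed.

Lemma prod_mono (X X' : {fset seq T}) (F : seq T -> R) :
  (forall r, r \in X' -> 0 <= F r <= 1) -> X `<=` X' ->
  \prod_(r <- X') F r <= \prod_(r <- X) F r.
Proof.
move=> h sub.
rewrite (big_fsetID _ (mem X)).
have -> : \prod_(i <- [fset x in X' | mem X x]) F i = \prod_(i <- X) F i.
  apply: eq_fbigl => i; rewrite !inE /=.
  by case iX: (i \in X); rewrite ?andbF // (fsubsetP sub).
have hX : 0 <= \prod_(i <- X) F i <= 1.
  by apply: prod01 => r rX; apply: h; apply: (fsubsetP sub).
have hR : 0 <= \prod_(i <- [fset x in X' | ~~ mem X x]) F i <= 1.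
  by apply: prod01 => r; rewrite !inE /= => /andP[? _]; apply: h.
case/andP: hX => a0 a1; case/andP: hR => b0 b1.
by rewrite -[X in _ <= X]mulr1 ler_wpM2l.
Qed.

End Aux.

Theorem lemma1 (R : realFieldType) (T : finType) (e : rel T)
  (w : T -> T -> R) (vs vt : T) (ps : R) (d : T -> R) :
  simple_graph e -> edge_weights e w ->
  0 < ps <= 1 ->
  (exists rho, feasible w e vs vt ps rho) ->
  (forall j, 0 < d j) ->
  let Xf := feasible w e vs vt ps in
  [/\ J w d fset0 = 0,
      (forall X : {fset seq T}, {subset X <= Xf} -> 0 <= J w d X),
      (forall X X' : {fset seq T}, {subset X' <= Xf} -> X `<=` X' ->
         J w d X <= J w d X')
    & (forall (X X' : {fset seq T}) (rho : seq T),
         {subset X' <= Xf} -> X `<=` X' -> Xf rho -> rho \notin X' ->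
         J w d (rho |` X') - J w d X' <= J w d (rho |` X) - J w d X)].
Proof.
move=> _ hw _ _ hd Xf.
have hq r j : Xf r -> 0 <= 1 - Ez w j r <= 1.
  move=> /and3P[hp _ _]; have /andP[h0 h1] := @Ez_bound _ _ e w r j hw hp.
  by rewrite subr_ge0 h1 /= lerBlDr lerDl.
split.
- by apply: big1 => j _; rewrite big_seq_fset0 subrr mulr0.
- move=> X hX; apply: sumr_ge0 => j _; apply: mulr_ge0; first exact: ltW.
  have /andP[_ h1] := @prod01 _ _ X _ (fun r rX => hq r j (hX r rX)).
  by rewrite subr_ge0.
- move=> X X' hX' sub; apply: ler_sum => j _.
  apply: ler_wpM2l; first exact: ltW.
  by rewrite lerD2l lerN2; apply: prod_mono => // r rX; apply: hq; apply: hX'.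
- move=> X X' rho hX' sub hr nr.
  have nrX : rho \notin X by apply: contra nr; apply: (fsubsetP sub).
  rewrite /J -!sumrB; apply: ler_sum => j _.
  rewrite !big_fsetU1 //= -!mulrBr; apply: ler_wpM2l; first exact: ltW.
  have E (q P : R) : 1 - q * P - (1 - P) = (1 - q) * P by ring.
  rewrite !E.
  apply: ler_wpM2l.
    by have /andP[_ h1] := hq rho j hr; rewrite subr_ge0.
  by apply: prod_mono => // r rX; apply: hq; apply: hX'.
Qed.
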